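(* Let $\mathcal{A}$ be a parity automaton with costs and let $(\rho_j^1)_{j\in\mathbb{N}}$ and $(\rho_j^2)_{j\in\mathbb{N}}$ be sequences of non-empty finite runs of $\mathcal{A}$ such that $\rho_j^1$ and $\rho_j^2$ have the same type for every $j$, and such that $\sup_j|\rho_j^1|<\infty$ and $\sup_j|\rho_j^2|<\infty$ (where $|\rho|$ is the number of transitions of $\rho$). Then $\rho_0^1\rho_1^1\rho_2^1\cdots$ is an accepting run if, and only if, $\rho_0^2\rho_1^2\rho_2^2\cdots$ is an accepting run.
   Context: A parity automaton with costs is a tuple $\mathcal{A}=(Q,\Sigma,q_I,\delta,\Omega,\mathrm{Cst})$ with a finite set $Q$ of states, a finite alphabet $\Sigma$, an initial state $q_I\in Q$, a deterministic complete transition function $\delta\colon Q\times\Sigma\to Q$ (also viewed as the set of transitions $(q,a,\delta(q,a))$), a coloring $\Omega\colon Q\to\mathbb{N}$, and a cost function $\mathrm{Cst}$ assigning to every transition either $\epsilon$ or $\mathtt{i}$ (the latter are called increment-transitions). Throughout, $\Omega(Q)$ contains both an even and an odd color. A run from $q_0$ on $a_0a_1\cdots$ is the sequence of transitions $(q_0,a_0,q_1)(q_1,a_1,q_2)\cdots$ with $q_{j+1}=\delta(q_j,a_j)$; the cost of a finite run is its number of increment-transitions. For odd $c$, let $\mathrm{Ans}(c)=\{c'\in\Omega(Q)\mid c'>c,\ c'\text{ even}\}$. For an infinite run $\rho=(q_0,a_0,q_1)(q_1,a_1,q_2)\cdots$ and $n\in\mathbb{N}$, $\mathrm{Cor}(\rho,n)=0$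 if $\Omega(q_n)$ is even, and otherwise $\mathrm{Cor}(\rho,n)$ is the minimum of the costs of $(q_n,a_n,q_{n+1})\cdots(q_{n'-1},a_{n'-1},q_{n'})$ over all $n'>n$ with $\Omega(q_{n'})\in\mathrm{Ans}(\Omega(q_n))$, with $\min\emptyset=\infty$. An infinite run $\rho$ is accepting if $\limsup_{n\to\infty}\mathrm{Cor}(\rho,n)<\infty$. The type of a non-empty finite run $(q_0,a_0,q_1)\cdots(q_{n-1},a_{n-1},q_n)$ is $(q_0,q_n,c_0,c_1,\ell)$ where (with $\max\emptyset=\bot$) $c_0=\max\{\Omega(q_j)\mid 0\le j\le n,\ \Omega(q_j)\text{ even}\}$, $c_1=\max\{\Omega(q_j)\mid 0\le j\le n,\ \Omega(q_j)\text{ odd},\ \Omega(q_{j'})\notin\mathrm{Ans}(\Omega(q_j))\text{ for all }j<j'\le n\}$, and $\ell=\mathtt{i}$ iff the run contains an increment-transition, $\ell=\epsilon$ otherwise. *)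

(* Defs.v *)
From mathcomp Require Import all_boot.
From mathcomp Require Import boolp.
Set Implicit Arguments. Unset Strict Implicit. Unset Printing Implicit Defensive.

Inductive cost := Eps | Inc.
Definition cost_eqb (a b : cost) : bool :=
  match a, b with Eps, Eps | Inc, Inc => true | _, _ => false end.

Record pac (Q Sigma : finType) := Pac {
  qI : Q;
  delta : Q -> Sigma -> Q;
  Omega : Q -> nat;
  Cst : Q * Sigma * Q -> cost }.

Section Defs.
Variables (Q Sigma : finType) (A : pac Q Sigma).

Definition trans := (Q * Sigma * Q)%type.

Definition is_trans (t : trans) : bool := t.2 == delta A t.1.1 t.1.2.

Definition inAns (c c' : nat) : bool :=
  [&& c < c', ~~ odd c' & [exists q : Q, Omega A q == c']].

(* A non-empty finite run is given by its first transition and the rest. *)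
Definition frun := (trans * seq trans)%type.
Definition fr_seq (r : frun) : seq trans := r.1 :: r.2.
Definition rlen (r : frun) : nat := size (fr_seq r).

Definition is_frun (r : frun) : bool :=
  all is_trans (fr_seq r) &&
  path (fun t u : trans => t.2 == u.1.1) r.1 r.2.

Definition fr_states (r : frun) : seq Q := r.1.1.1 :: map (fun t : trans => t.2) (fr_seq r).

(* max of a list of naturals, bottom (None) for the empty list *)
Definition omax (s : seq nat) : option nat :=
  if s is [::] then None else Some (\max_(x <- s) x).

Definition rtype (r : frun) : Q * Q * option nat * option nat * cost :=
  let qs := fr_states r in
  let cs := map (Omega A) qs in
  let c0 := omax [seq c <- cs | ~~ odd c] in
  let c1 := omax [seq nth 0 cs j | j <- iota 0 (size cs) &
                   odd (nth 0 cs j) &&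
                   all (fun c' => ~~ inAns (nth 0 cs j) c') (drop j.+1 cs)] in
  let l := if has (fun t => cost_eqb (Cst A t) Inc) (fr_seq r) then Inc else Eps in
  (r.1.1.1, last r.1.1.1 qs, c0, c1, l).

Definition is_irun (rho : nat -> trans) : Prop :=
  forall n, is_trans (rho n) /\ (rho n).2 = (rho n.+1).1.1.

Definition istate (rho : nat -> trans) (n : nat) : Q := (rho n).1.1.

Definition segcost (rho : nat -> trans) (n n' : nat) : nat :=
  count (fun i => cost_eqb (Cst A (rho i)) Inc) (iota n (n' - n)).

Lemma ex_asbool (P : nat -> Prop) : (exists m, P m) -> exists m, `[< P m >].
Proof. by case=> m Pm; exists m; apply/asboolP. Qed.

(* Cor(rho, n), with None standing for infinity (min of the empty set). *)
Definition Cor (rho : nat -> trans) (n : nat) : option nat :=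
  let c := Omega A (istate rho n) in
  if ~~ odd c then Some 0 else
  let P := fun m => exists n', n < n' /\ inAns c (Omega A (istate rho n')) /\
                              segcost rho n n' = m in
  match pselect (exists m, P m) with
  | left h => Some (ex_minn (ex_asbool h))
  | right _ => None
  end.

(* limsup_n Cor(rho, n) < infinity, written out: eventually bounded. *)
Definition accepting (rho : nat -> trans) : Prop :=
  is_irun rho /\
  exists N B, forall n, N <= n -> exists c, Cor rho n = Some c /\ c <= B.

Definition offset (rs : nat -> frun) (j : nat) : nat :=
  \sum_(i < j) rlen (rs i).

Definition blk (rs : nat -> frun) (n : nat) : nat :=
  \max_(j < n.+1 | offset rs j <= n) j.

Definition cat_inf (rs : nat -> frun) (n : nat) : trans :=
  let j := blk rs n in nth (rs j).1 (fr_seq (rs j)) (n - offset rs j).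

End Defs.

(* Main.v *)
Require Import Defs.
From mathcomp Require Import all_boot zify.
From mathcomp Require Import boolp.
Set Implicit Arguments. Unset Strict Implicit. Unset Printing Implicit Defensive.

Section Aux.
Variables (Q Sigma : finType) (A : pac Q Sigma) (rs : nat -> frun Q Sigma).

Lemma rlen_gt0 (r : frun Q Sigma) : 0 < rlen r.
Proof. by []. Qed.

Lemma offsetS j : offset rs j.+1 = offset rs j + rlen (rs j).
Proof. by rewrite /offset big_ord_recr. Qed.

Lemma offset0 : offset rs 0 = 0.
Proof. by rewrite /offset big_ord0. Qed.

Lemma offset_mono i j : i <= j -> offset rs i <= offset rs j.
Proof.
apply: (@homo_leq _ (offset rs) leq) => //; first exact: leq_trans.
by move=> k; rewrite offsetS leq_addr.
Qed.

Lemma offset_lt i j : i < j -> offset rs i.+1 <= offset rs j.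
Proof. exact: offset_mono. Qed.

Lemma offset_ge j : j <= offset rs j.
Proof.
elim: j => [|j IH]; first by [].
by rewrite offsetS -addn1 (leq_add IH (rlen_gt0 _)).
Qed.

Lemma blk_off j k : k < rlen (rs j) -> blk rs (offset rs j + k) = j.
Proof.
move=> hk; rewrite /blk; apply/eqP; rewrite eqn_leq; apply/andP; split.
  apply/bigmax_leqP => i hi; rewrite leqNgt; apply/negP => hji.
  have := offset_lt hji; rewrite offsetS => h.
  have := leq_trans h hi; by rewrite leq_add2l leqNgt hk.
have hj : j < (offset rs j + k).+1 by rewrite ltnS (leq_trans (offset_ge j)) // leq_addr.
by apply: (@leq_bigmax_cond _ _ _ (Ordinal hj)); rewrite /= leq_addr.
Qed.

Lemma cat_inf_off j k : k < rlen (rs j) ->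
  cat_inf rs (offset rs j + k) = nth (rs j).1 (fr_seq (rs j)) k.
Proof. by move=> hk; rewrite /cat_inf blk_off // addKn. Qed.

Lemma decomp n : exists j k, k < rlen (rs j) /\ n = offset rs j + k.
Proof.
elim: n => [|n [j [k [hk ->]]]]; first by exists 0, 0; rewrite offset0.
case: (ltnP k.+1 (rlen (rs j))) => h.
  by exists j, k.+1; rewrite addnS.
exists j.+1, 0; split => //.
have e : k.+1 = rlen (rs j) by apply/eqP; rewrite eqn_leq h hk.
by rewrite addn0 offsetS -e addnS.
Qed.


Definition pinc (t : trans Q Sigma) := cost_eqb (Cst A t) Inc.
Definition bcost (r : frun Q Sigma) := count pinc (fr_seq r).
Notation rho := (cat_inf rs).
Notation off := (offset rs).

Lemma segcost_add n m p : n <= m -> m <= p ->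
  segcost A rho n p = segcost A rho n m + segcost A rho m p.
Proof.
move=> hnm hmp; rewrite /segcost.
have -> : p - n = (m - n) + (p - m) by rewrite addnC addnBA // subnK // (leq_trans hnm).
by rewrite iotaD count_cat subnKC.
Qed.

Lemma segcost_le n m : segcost A rho n m <= m - n.
Proof. by rewrite /segcost (leq_trans (count_size _ _)) // size_iota. Qed.

Lemma segcost_nn n : segcost A rho n n = 0.
Proof. by rewrite /segcost subnn. Qed.

Lemma segcost_mono m n n' m' : m <= n -> n <= n' -> n' <= m' ->
  segcost A rho n n' <= segcost A rho m m'.
Proof.
move=> h1 h2 h3.
rewrite (@segcost_add m n m') ?(leq_trans h2) // (@segcost_add n n' m') //.
by rewrite addnCA leq_addr.
Qed.

Lemma segcost_block j : segcost A rho (off j) (off j.+1) = bcost (rs j).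
Proof.
rewrite /segcost offsetS addKn.
transitivity (count pinc (map rho (iota (off j) (rlen (rs j))))); first by rewrite count_map.
congr count; apply: (@eq_from_nth _ (rs j).1); first by rewrite size_map size_iota.
move=> i; rewrite size_map size_iota => hi.
by rewrite (nth_map 0) ?size_iota // nth_iota // cat_inf_off.
Qed.

Lemma segcost_off a b : a <= b ->
  segcost A rho (off a) (off b) = \sum_(a <= i < b) bcost (rs i).
Proof.
elim: b => [|b IH] hab.
  by move: hab; rewrite leqn0 => /eqP ->; rewrite segcost_nn big_geq.
case: (ltnP b a) => h.
  have e : a = b.+1 by apply/eqP; rewrite eqn_leq hab h.
  by rewrite e segcost_nn big_geq.
rewrite (@segcost_add _ (off b)) ?offset_mono ?leqnSn // IH // big_nat_recr //.
by rewrite segcost_block.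
Qed.

Definition conn := forall j, (rtype A (rs j)).1.1.1.2 = (rtype A (rs j.+1)).1.1.1.1.

Lemma last_fr_states (r : frun Q Sigma) :
  last r.1.1.1 (fr_states r) = (last r.1 r.2).2.
Proof. by rewrite /fr_states /fr_seq /= last_map. Qed.

Lemma nth_fr_last (r : frun Q Sigma) : nth r.1 (fr_seq r) (size r.2) = last r.1 r.2.
Proof. by rewrite /fr_seq; have := nth_last r.1 (r.1 :: r.2). Qed.

Lemma irun_of_conn : (forall j, is_frun A (rs j)) -> conn -> is_irun A rho.
Proof.
move=> hf hc n; have [j [k [hk ->]]] := decomp n.
have /andP [hall hpath] := hf j.
split.
  by rewrite cat_inf_off //; apply: (all_nthP (rs j).1 hall).
case: (ltnP k.+1 (rlen (rs j))) => h.
  rewrite -addnS !cat_inf_off //.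
  by have := (pathP (rs j).1 hpath) k h => /eqP.
have e : k = size (rs j).2 by apply/eqP; rewrite -eqSS eqn_leq h hk.
rewrite -addnS cat_inf_off // -(addn0 (off j + k.+1)) e.
have -> : off j + (size (rs j).2).+1 = off j.+1 by rewrite offsetS.
rewrite cat_inf_off // nth_fr_last.
by have := hc j; rewrite /rtype /= (last_map (fun t : trans Q Sigma => t.2)) => ->.
Qed.

Lemma conn_of_irun : is_irun A rho -> conn.
Proof.
move=> hi j; rewrite /rtype /= (last_map (fun t : trans Q Sigma => t.2)).
have hk : size (rs j).2 < rlen (rs j) by [].
have := (hi (off j + size (rs j).2)).2.
rewrite cat_inf_off // nth_fr_last -addnS.
have -> : off j + (size (rs j).2).+1 = off j.+1 + 0 by rewrite offsetS addn0.
by rewrite cat_inf_off.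
Qed.

Lemma bridge : is_irun A rho -> forall j k, k <= rlen (rs j) ->
  nth 0 (map (Omega A) (fr_states (rs j))) k = Omega A (istate rho (off j + k)).
Proof.
move=> hi j k hk.
have hs : k < size (fr_states (rs j)) by rewrite /fr_states /= size_map ltnS.
rewrite (nth_map (rs j).1.1.1) //; apply: congr1.
case: k hk hs => [|k] hk hs.
  by rewrite /istate addn0 -(addn0 (off j)) cat_inf_off.
change (nth (rs j).1.1.1 (map (fun t : trans Q Sigma => t.2) (fr_seq (rs j))) k = istate rho (off j + k.+1)).
rewrite (nth_map (rs j).1) // /istate addnS.
by rewrite -(hi (off j + k)).2 cat_inf_off.
Qed.


End Aux.

Section Types.
Variables (Q Sigma : finType) (A : pac Q Sigma).

Lemma omax_mem s m : omax s = Some m -> m \in s.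
Proof.
case: s => [|x s] //= [<-].
elim: s x => [|y s IH] x; first by rewrite big_cons big_nil maxn0 mem_seq1.
rewrite big_cons; case: (leqP x (\max_(z <- y :: s) z)) => h.
  by rewrite in_cons IH orbT.
by rewrite in_cons eqxx.
Qed.

Lemma omax_ge s x : x \in s -> exists m, omax s = Some m /\ x <= m.
Proof.
case: s => [|y s] // hx; exists (\max_(z <- y :: s) z); split => //.
by apply: (@leq_bigmax_seq _ _ xpredT (fun z => z)).
Qed.

Definition c0f (cs : seq nat) := omax [seq c <- cs | ~~ odd c].
Definition c1f (cs : seq nat) :=
  omax [seq nth 0 cs j | j <- iota 0 (size cs) &
                   odd (nth 0 cs j) &&
                   all (fun c' => ~~ inAns A (nth 0 cs j) c') (drop j.+1 cs)].

Lemma T0a cs e : c0f cs = Some e -> exists2 k, k < size cs & nth 0 cs k = e /\ ~~ odd e.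
Proof.
move/omax_mem; rewrite mem_filter => /andP [he /(nthP 0) [k hk hke]].
by exists k.
Qed.

Lemma T0b cs k : k < size cs -> ~~ odd (nth 0 cs k) ->
  exists e, c0f cs = Some e /\ nth 0 cs k <= e.
Proof. by move=> hk ho; apply: omax_ge; rewrite mem_filter ho mem_nth. Qed.

Lemma T1a cs c : c1f cs = Some c -> exists2 k, k < size cs &
  [/\ nth 0 cs k = c, odd c & all (fun c' => ~~ inAns A c c') (drop k.+1 cs)].
Proof.
move/omax_mem => /mapP [k]; rewrite mem_filter mem_iota add0n => /andP [/andP [h1 h2] /andP [_ hk]] ->.
by exists k.
Qed.

Lemma T1b cs k : k < size cs -> odd (nth 0 cs k) ->
  all (fun c' => ~~ inAns A (nth 0 cs k) c') (drop k.+1 cs) ->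
  exists c, c1f cs = Some c /\ nth 0 cs k <= c.
Proof.
move=> hk h1 h2; apply: omax_ge; apply/mapP; exists k => //.
by rewrite mem_filter h1 h2 mem_iota add0n hk.
Qed.

Lemma Cor_le (rho : nat -> trans Q Sigma) n M :
  odd (Omega A (istate rho n)) ->
  (exists n', [/\ n < n', inAns A (Omega A (istate rho n)) (Omega A (istate rho n')) &
     segcost A rho n n' <= M]) ->
  exists x, Cor A rho n = Some x /\ x <= M.
Proof.
move=> ho [n' [h1 h2 h3]]; rewrite /Cor ho /=.
case: pselect => [h|h]; last first.
  by exfalso; apply: h; exists (segcost A rho n n'); exists n'.
eexists; split; first reflexivity.
case: ex_minnP => m _ hmin; apply: leq_trans h3; apply: hmin.
by apply/asboolP; exists n'.
Qed.

Lemma Cor_spec (rho : nat -> trans Q Sigma) n x :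
  odd (Omega A (istate rho n)) -> Cor A rho n = Some x ->
  exists n', [/\ n < n', inAns A (Omega A (istate rho n)) (Omega A (istate rho n')) &
     segcost A rho n n' = x].
Proof.
move=> ho; rewrite /Cor ho /=.
case: pselect => [h|h] //; case: ex_minnP => m /asboolP [n' [h1 [h2 h3]]] _ [<-].
by exists n'.
Qed.

Lemma Cor_even (rho : nat -> trans Q Sigma) n :
  ~~ odd (Omega A (istate rho n)) -> Cor A rho n = Some 0.
Proof. by move=> he; rewrite /Cor he. Qed.

End Types.

Section Main.
Variables (Q Sigma : finType) (A : pac Q Sigma) (rs : nat -> frun Q Sigma) (K : nat).
Hypothesis hf : forall j, is_frun A (rs j).
Hypothesis hK : forall j, rlen (rs j) <= K.
Notation rho := (cat_inf rs).
Notation off := (offset rs).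
Notation css r := (map (Omega A) (fr_states r)).
Notation col n := (Omega A (istate rho n)).

Definition BC := exists J B, forall j, J <= j -> forall c, (rtype A (rs j)).1.2 = Some c ->
  exists j', [/\ j < j', (exists e, (rtype A (rs j')).1.1.2 = Some e /\ c < e) &
     \sum_(j.+1 <= i < j') (cost_eqb (rtype A (rs i)).2 Inc) <= B].

Lemma size_css (r : frun Q Sigma) : size (css r) = (rlen r).+1.
Proof. by rewrite size_map /fr_states /= size_map. Qed.

Lemma rtype_l (r : frun Q Sigma) : (rtype A r).2 = if has (pinc A) (fr_seq r) then Inc else Eps.
Proof. by []. Qed.

Lemma tl_le (r : frun Q Sigma) : (cost_eqb (rtype A r).2 Inc) <= bcost A r.
Proof. by rewrite rtype_l /bcost; case: ifP => //; rewrite has_count. Qed.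

Lemma bcost_le (r : frun Q Sigma) : rlen r <= K -> bcost A r <= K * (cost_eqb (rtype A r).2 Inc).
Proof.
move=> h; rewrite rtype_l /bcost; case: ifP => hh.
  by rewrite [cost_eqb _ _]/= muln1; apply: leq_trans (count_size _ _) h.
by move: hh; rewrite has_count => /negbT; rewrite -leqNgt leqn0 => /eqP ->; rewrite muln0.
Qed.

Lemma acc_BC : accepting A rho -> BC.
Proof.
move=> [hi [N [B hB]]]; exists N, B => j hj c hc.
have [k hk [hkc hco hall]] := T1a hc.
rewrite size_css ltnS in hk.
have hcol := bridge hi hk; rewrite hkc in hcol.
have hN : N <= off j + k by rewrite (leq_trans hj) // (leq_trans (offset_ge rs j)) // leq_addr.
have [x [hx hxB]] := hB _ hN.
rewrite hcol in hco.
have [n' [hn1 hn2 hn3]] := Cor_spec hco hx.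
rewrite -hcol in hn2.
have [j' [k' [hk' hn']]] := decomp rs n'.
have hoff : off j.+1 < n'.
  rewrite ltnNge; apply/negP => hle.
  move: hle; rewrite offsetS => hle.
  have hsz : n' - off j - k.+1 < size (drop k.+1 (css (rs j))).
    rewrite size_drop size_css; lia.
  have := (all_nthP 0 hall) _ hsz; rewrite nth_drop.
  have hle2 : k.+1 + (n' - off j - k.+1) <= rlen (rs j) by lia.
  rewrite (bridge hi hle2).
  have -> : off j + (k.+1 + (n' - off j - k.+1)) = n' by lia.
  by rewrite hn2.
have hjj : j < j'.
  rewrite ltnNge; apply/negP => hle.
  have h5 : off j'.+1 <= off j.+1 by apply: offset_mono.
  have h4 : n' < off j'.+1 by rewrite offsetS hn' ltn_add2l.
  lia.
exists j'; split => //.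
  have hk'2 : k' <= rlen (rs j') by exact: ltnW.
  have hb := bridge hi hk'2; rewrite -hn' in hb.
  move: hn2 => /and3P [hlt heven _].
  have [e [he hle]] : exists e, c0f (css (rs j')) = Some e /\ nth 0 (css (rs j')) k' <= e.
    by apply: T0b; [rewrite size_css ltnS | rewrite hb].
  exists e; split; first exact: he.
  by rewrite -hb in hlt; exact: leq_trans hlt hle.
apply: leq_trans (_ : \sum_(j.+1 <= i < j') bcost A (rs i) <= B).
  by apply: leq_sum => i _; apply: tl_le.
rewrite -segcost_off //; apply: leq_trans hxB; rewrite -hn3; apply: segcost_mono => //.
- by rewrite offsetS leq_add2l.
- exact: offset_mono.
- by rewrite hn' leq_addr.
Qed.

Lemma BC_acc : is_irun A rho -> BC -> accepting A rho.
Proof.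
move=> hi [J [B hBC]]; split => //; exists (off J), (K * B + K + K) => n hn.
have [j [k [hk hnk]]] := decomp rs n.
have hjJ : J <= j.
  rewrite leqNgt; apply/negP => hlt.
  have h1 : off j.+1 <= off J by apply: offset_mono.
  move: h1; rewrite offsetS; lia.
have hk1 : k <= rlen (rs j) by exact: ltnW.
have hcol := bridge hi hk1; rewrite -hnk in hcol.
case: (boolP (odd (col n))) => hodd; last first.
  by exists 0; rewrite Cor_even.
have hKj := hK j.
apply: Cor_le => //.
case: (boolP (all (fun c' => ~~ inAns A (col n) c') (drop k.+1 (css (rs j))))) => hall.
- rewrite -hcol in hall hodd.
  have hks : k < size (css (rs j)) by rewrite size_css ltnS.
  have [c1 [hc1 hle1]] := T1b hks hodd hall.
  have [j' [hjj' [e [he hce]] hsum]] := hBC j hjJ c1 hc1.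
  have [k'' hk'' [hke heven]] := T0a he.
  rewrite size_css ltnS in hk''.
  have hcol' := bridge hi hk''; rewrite hke in hcol'.
  have hKj' := hK j'.
  exists (off j' + k''); split.
  + have : off j.+1 <= off j' by apply: offset_mono.
    rewrite offsetS; lia.
  + rewrite -hcol' -hcol; apply/and3P; split => //.
      exact: leq_ltn_trans hle1 hce.
    by apply/existsP; exists (istate rho (off j' + k'')); rewrite hcol'.
  + have hm : off j.+1 <= off j' by apply: offset_mono.
    rewrite (@segcost_add _ _ _ _ n (off j.+1)); last by rewrite (leq_trans hm) // leq_addr.
      2: by rewrite hnk offsetS leq_add2l ltnW.
    rewrite (@segcost_add _ _ _ _ (off j.+1) (off j')) // ?leq_addr // segcost_off //.
    have h1 := segcost_le A rs n (off j.+1).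
    have h3 := segcost_le A rs (off j') (off j' + k'').
    have h2 : \sum_(j.+1 <= i < j') bcost A (rs i) <= K * B.
      apply: leq_trans (_ : \sum_(j.+1 <= i < j') K * (cost_eqb (rtype A (rs i)).2 Inc) <= _).
        by apply: leq_sum => i _; apply: bcost_le.
      by rewrite -big_distrr leq_mul2l hsum orbT.
    move: h1 h3; rewrite offsetS hnk; lia.
- move/allPn: hall => [x hx]; rewrite negbK => hans.
  move/(nthP 0): hx => [i hi' hix].
  rewrite nth_drop in hix.
  move: hi'; rewrite size_drop size_css => hi'.
  have hle : k.+1 + i <= rlen (rs j) by lia.
  have hb := bridge hi hle.
  exists (off j + (k.+1 + i)); split.
  + rewrite hnk; lia.
  + by rewrite -hb hix.
  + apply: leq_trans (segcost_le _ _ _ _) _; rewrite hnk; lia.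
Qed.

End Main.

Lemma BC_eq (Q Sigma : finType) (A : pac Q Sigma) (r1 r2 : nat -> frun Q Sigma) :
  (forall j, rtype A (r1 j) = rtype A (r2 j)) -> BC A r1 -> BC A r2.
Proof.
move=> ht [J [B h]]; exists J, B => j hj c; rewrite -ht => /(h j hj c) [j' [a [e [he hce]] s]].
exists j'; split => //; first by exists e; rewrite -ht.
by under eq_bigr => i _ do rewrite -ht.
Qed.

Lemma conn_eq (Q Sigma : finType) (A : pac Q Sigma) (r1 r2 : nat -> frun Q Sigma) :
  (forall j, rtype A (r1 j) = rtype A (r2 j)) -> conn A r1 -> conn A r2.
Proof. by move=> ht hc j; rewrite -!ht. Qed.

Lemma half (Q Sigma : finType) (A : pac Q Sigma) (r1 r2 : nat -> frun Q Sigma) :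
  (forall j, is_frun A (r1 j)) ->
  (forall j, is_frun A (r2 j)) ->
  (forall j, rtype A (r1 j) = rtype A (r2 j)) ->
  (exists K, forall j, rlen (r1 j) <= K) ->
  (exists K, forall j, rlen (r2 j) <= K) ->
  accepting A (cat_inf r1) -> accepting A (cat_inf r2).
Proof.
move=> hf1 hf2 ht [K1 hK1] [K2 hK2] hacc.
have hbc := acc_BC hacc.
have hi2 : is_irun A (cat_inf r2).
  apply: irun_of_conn => //; apply: conn_eq ht _; apply: conn_of_irun; exact: hacc.1.
apply: (BC_acc hK2 hi2); exact: BC_eq ht hbc.
Qed.

Theorem corollary1 (Q Sigma : finType) (A : pac Q Sigma)
  (Heven : exists q : Q, ~~ odd (Omega A q))
  (Hodd : exists q : Q, odd (Omega A q))
  (r1 r2 : nat -> frun Q Sigma) :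
  (forall j, is_frun A (r1 j)) ->
  (forall j, is_frun A (r2 j)) ->
  (forall j, rtype A (r1 j) = rtype A (r2 j)) ->
  (exists K, forall j, rlen (r1 j) <= K) ->
  (exists K, forall j, rlen (r2 j) <= K) ->
  (accepting A (cat_inf r1) <-> accepting A (cat_inf r2)).
Proof.
move=> hf1 hf2 ht hK1 hK2; split; first exact: half.
by apply: half => // j; rewrite ht.
Qed.
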